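(* Fix $\Delta>0$. In the $\mathrm{EDD}(\lambda)$ model with a global clock, the probability that a run of the CORE$(\Delta)$-Message-Chain hybrid protocol is correct is at least $(1-e^{-\lambda\Delta})^n$.
   Context: Agents $i_0,i_1,\ldots,i_n$ share an accurate global clock and are connected by a complete reliable network; the delay of each message is an independent exponential random variable with parameter $\lambda$. At time $0$ the supervisor $i_0$ receives an external input. The CORE$(\Delta)$-Message-Chain hybrid protocol: at time $0$, $i_0$ sends a ''trigger'' message to each of $i_1,\ldots,i_n$ and additionally sends an ''act'' message to $i_1$. A worker $i_k$ that receives a chain message (the ''act'' message for $i_1$, or the chain message from $i_{k-1}$ for $k\ge2$) before having acted performs its action $\alpha_k$ immediately, sends a chain message to $i_{k+1}$ (if $k<n$), and terminates. Until then, $i_k$ follows CORE$(\Delta)$: upon receiving the trigger it waits until the global time is at least $\Delta$ and then performs $\alpha_k$ (immediately if the trigger arrives after $\Delta$) and terminates; a terminated agent does not propagate the chain. With $t_k$ the time at which $i_k$ performs $\alpha_k$, a run is correct if $t_1\le t_2\le\cdots\le t_n<\infty$. *)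

(* Defs.v *)
From HB Require Import structures.
From mathcomp Require Import all_boot all_order all_algebra.
From mathcomp Require Import all_classical all_reals all_analysis.
Set Implicit Arguments. Unset Strict Implicit. Unset Printing Implicit Defensive.
Import Order.TTheory GRing.Theory Num.Theory.
Local Open Scope classical_set_scope.
Local Open Scope ring_scope.

(* Index type of the messages whose delays matter, for n workers:
   - inl (inl k) : the trigger from i_0 to worker i_(k+1)      (k : 'I_n)
   - inl (inr tt): the "act" message from i_0 to i_1
   - inr k       : the chain message from i_(k+1) to i_(k+2)   (k : 'I_n.-1) *)
Definition msg (n : nat) : finType := (('I_n + unit) + 'I_n.-1)%type.

Section Protocol.
Variables (R : realType) (n : nat) (Delta : R) (delay : msg n -> R).

Definition trig_delay (k : nat) : R :=
  oapp (fun i : 'I_n => delay (inl (inl i))) 0 (insub k).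
Definition chain_delay (k : nat) : R :=
  oapp (fun i : 'I_n.-1 => delay (inr i)) 0 (insub k).
Definition act_delay : R := delay (inl (inr tt)).

(* time at which worker i_(k+1) would act under CORE(Delta) alone *)
Definition core_time (k : nat) : R := Num.max Delta (trig_delay k).

(* arrival time of a chain message at worker i_(k+1) (None: never sent) *)
Fixpoint chain_arrival (k : nat) : option R :=
  match k with
  | 0 => Some act_delay
  | k'.+1 =>
      match chain_arrival k' with
      | Some r => if r < core_time k' then Some (r + chain_delay k') else None
      | None => None
      end
  end.

Definition action_time (k : nat) : R :=
  match chain_arrival k with
  | Some r => if r < core_time k then r else core_time k
  | None => core_time k
  end.

Definition run_correct : Prop :=
  forall k : nat, (k.+1 < n)%N -> action_time k <= action_time k.+1.
End Protocol.

Definition mutually_independent (d : measure_display) (T : measurableType d)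
    (R : realType) (P : probability T R) (I : finType) (X : I -> T -> R) : Prop :=
  forall B : I -> set R, (forall i, measurable (B i)) ->
    P (\bigcap_(i in [set: I]) (X i @^-1` B i)) =
    (\big[*%E/1%E]_(i : I) P (X i @^-1` B i))%E.

Definition exp_distributed (d : measure_display) (T : measurableType d)
    (R : realType) (P : probability T R) (lambda : R) (X : T -> R) : Prop :=
  forall B : set R, measurable B -> P (X @^-1` B) = exponential_prob lambda B.

(* Main.v *)
Require Import Defs.
From HB Require Import structures.
From mathcomp Require Import all_boot all_order all_algebra.
From mathcomp Require Import all_classical all_reals all_analysis.
From mathcomp Require Import measurable_realfun.
Import Order.TTheory GRing.Theory Num.Theory.
Local Open Scope classical_set_scope.
Local Open Scope ring_scope.

Lemma core_ge (R : realType) n (Delta : R) (delay : msg n -> R) k :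
  Delta <= core_time Delta delay k.
Proof. by rewrite /core_time le_max lexx. Qed.

Lemma chain_ge0 (R : realType) n (delay : msg n -> R) k :
  (forall i, 0 <= delay (inr i)) -> 0 <= chain_delay delay k.
Proof. by move=> H; rewrite /chain_delay; case: insubP => //= i _ _. Qed.

Lemma key (R : realType) n (Delta : R) (delay : msg n -> R) :
  (forall i, delay (inl (inl i)) <= Delta) ->
  (forall i, 0 <= delay (inr i)) -> run_correct Delta delay.
Proof.
move=> Ht Hc k kn.
have ck : core_time Delta delay k = Delta.
  rewrite /core_time /trig_delay insubT; first by apply: ltn_trans kn.
  by move=> kn' /=; apply/max_idPl; apply: Ht.
have c0 := @chain_ge0 R n delay k Hc.
have cg := @core_ge R n Delta delay k.+1.
rewrite /action_time /=.
case: (chain_arrival Delta delay k) => [r|]; last by rewrite ck.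
rewrite ck; case: ifPn => rlt.
  case: ifPn => _; first by rewrite lerDl.
  by rewrite (le_trans (ltW rlt)).
by [].
Qed.

Section Meas.
Context (R : realType) (d : measure_display) (T : measurableType d) (n : nat)
  (Delta : R) (dl : T -> msg n -> R)
  (mdl : forall m, measurable_fun [set: T] (fun w => dl w m)).

Lemma m_trig k : measurable_fun [set: T] (fun w => trig_delay (dl w) k).
Proof. rewrite /trig_delay; case: (insub k) => [i|] /=; [exact: mdl|exact: measurable_cst]. Qed.

Lemma m_chain k : measurable_fun [set: T] (fun w => chain_delay (dl w) k).
Proof. rewrite /chain_delay; case: (insub k) => [i|] /=; [exact: mdl|exact: measurable_cst]. Qed.

Lemma m_core k : measurable_fun [set: T] (fun w => core_time Delta (dl w) k).
Proof.
rewrite /core_time.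
exact: (measurable_maxr (measurable_cst (Delta : R)) (m_trig k)).
Qed.

Lemma m_arrival k : exists (b : T -> bool) (a : T -> R),
  [/\ measurable_fun [set: T] b, measurable_fun [set: T] a &
   forall w, chain_arrival Delta (dl w) k = if b w then Some (a w) else None].
Proof.
elim: k => [|k [b [a [mb ma Ha]]]].
  exists (fun _ => true), (fun w => act_delay (dl w)); split => //.
  all: try exact: mdl.
exists (fun w => b w && (a w < core_time Delta (dl w) k)).
exists (fun w => a w + chain_delay (dl w) k); split.
- apply: measurable_and => //; apply: measurable_fun_ltr => //; exact: m_core.
- apply: measurable_funD => //; exact: m_chain.
- move=> w /=; rewrite Ha; case: (b w) => //=.
Qed.

Lemma m_action k : measurable_fun [set: T] (fun w => action_time Delta (dl w) k).
Proof.
have [b [a [mb ma Ha]]] := m_arrival k.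
rewrite /action_time.
have -> : (fun w => match chain_arrival Delta (dl w) k with
             | Some r => if r < core_time Delta (dl w) k then r else core_time Delta (dl w) k
             | None => core_time Delta (dl w) k end) =
          (fun w => if b w then (if a w < core_time Delta (dl w) k then a w
                                 else core_time Delta (dl w) k)
                    else core_time Delta (dl w) k).
  by apply: funext => w; rewrite Ha; case: (b w).
apply: measurable_fun_ifT => //; last exact: m_core.
apply: measurable_fun_ifT => //; last exact: m_core.
apply: measurable_fun_ltr => //; exact: m_core.
Qed.

Lemma m_correct : measurable [set w | run_correct Delta (dl w)].
Proof.
have -> : [set w | run_correct Delta (dl w)] =
  \bigcap_k [set w | (k.+1 < n)%N -> action_time Delta (dl w) k <= action_time Delta (dl w) k.+1].
  apply/seteqP; split => w /= H k.
    by move=> _; apply: H.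
  by apply: (H k).
apply: bigcapT_measurable => k.
case: (ltnP k.+1 n) => kn.
  have mt : measurable [set true] by [].
  have := measurable_fun_ler (m_action k) (m_action k.+1) measurableT
     (mt : measurable [set true]).
  rewrite setTI; congr measurable; apply/seteqP; split => w /=.
    by move=> ->.
  by move=> H; apply: H.
rewrite [X in measurable X](_ : _ = setT) //.
by apply/seteqP; split => w //=.
Qed.
End Meas.

Lemma exp_prob_ge0itv (R : realType) (lambda : R) : 0 < lambda ->
  exponential_prob lambda `[0, +oo[%classic = 1%E.
Proof.
move=> l0.
rewrite -(integral_exponential_pdf l0) /exponential_prob.
have mEex : measurable_fun setT (EFin \o exponential_pdf lambda).
  by apply/measurable_EFinP; exact: measurable_exponential_pdf.
rewrite -[in RHS](setUv `[0, +oo[%classic) ge0_integral_setU//=; last 4 first.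
  exact: measurableC.
  by rewrite setUv.
  by move=> x _; rewrite lee_fin exponential_pdf_ge0// ltW.
  exact/disj_setPCl.
rewrite [X in _ = (_ + X)%E]integral0_eq ?adde0 //.
by move=> x x0; rewrite /exponential_pdf patchE ifF// memNset.
Qed.

Theorem theorem4 (R : realType) (d : measure_display) (T : measurableType d)
    (P : probability T R) (lambda Delta : R) (n : nat)
    (X : msg n -> {RV P >-> R}) :
  0 < lambda -> 0 < Delta ->
  mutually_independent P (fun m => (X m : T -> R)) ->
  (forall m, exp_distributed P lambda (X m)) ->
  (((1 - expR (- (lambda * Delta))) ^+ n)%:E
     <= P [set w | @run_correct R n Delta (fun m => X m w)])%E.
Proof.
move=> l0 D0 Hind Hexp.
pose B (m : msg n) : set R := match m with
  | inl (inl _) => `[0, Delta]%classic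
  | inl (inr _) => setT
  | inr _ => `[0, +oo[%classic end.
have mB : forall m, measurable (B m).
  by case=> [[i|u]|i] /=; exact: measurable_itv || exact: measurableT.
pose E := \bigcap_(m in [set: msg n]) ((X m : T -> R) @^-1` B m).
have mE : measurable E.
  apply: fin_bigcap_measurable; first exact: finite_finset.
  move=> m _; rewrite -[_ @^-1` _]setTI; apply: measurable_funPT => //.
have mC : measurable [set w | @run_correct R n Delta (fun m => X m w)].
  apply: (@m_correct R d T n Delta (fun w m => X m w)) => m.
  exact: measurable_funPT.
have EC : E `<=` [set w | @run_correct R n Delta (fun m => X m w)].
  move=> w Ew; apply: key.
    move=> i; have := Ew (inl (inl i)) I; rewrite /= in_itv /=.
    by case/andP.
  move=> i; have := Ew (inr i) I; rewrite /= in_itv /=.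
  by rewrite andbT.
have PEC : (P E <= P [set w | @run_correct R n Delta (fun m => X m w)])%E.
  by apply: le_measure => //; rewrite inE.
apply: (le_trans _ PEC).
rewrite /E Hind // big_sumType big_sumType /=.
rewrite (eq_bigr (fun _ => (1 - expR (- (lambda * Delta)))%:E)); last first.
  move=> i _; rewrite Hexp // exponential_prob_itv0c // mulNr EFinB //.
rewrite [X in (_ * X * _)%E]big1; last first.
  move=> i _; by rewrite Hexp // /exponential_prob integral_exponential_pdf.
rewrite [X in (_ * X)%E]big1; last first.
  move=> i _; rewrite Hexp //; exact: exp_prob_ge0itv.
rewrite !mule1 prodEFin prodr_const card_ord //.
Qed.
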